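(* Let $k$ be a commutative ring, $P$ an invertible $k$-module, $Q=P^*$, and $A$ a $P$-Frobenius $k$-algebra with Frobenius system $(\psi,x_i,q_i,y_i)$. Then $A$ is a separable $k$-algebra if and only if there is $d=\sum_jp_j\otimes a_j\in P\otimes_kA$ such that \[ \sum_{i,j}x_i\,q_i(p_j)\,a_j\,y_i=1_A. \]
   Context: $A$ is $P$-Frobenius if it is finitely generated projective over $k$ and $A_A\cong\mathrm{Hom}_k(A,P)_A$, where $(\psi a)(x)=\psi(ax)$. A Frobenius system consists of $\psi\in\mathrm{Hom}_k(A,P)$ such that $a\mapsto\psi a$ is an isomorphism $A\to\mathrm{Hom}_k(A,P)$, and finitely many $x_i,y_i\in A$, $q_i\in Q$ with $\sum_ix_i\,q_i(\psi(y_ia))=a$ and $\sum_iq_i(\psi(ax_i))\,y_i=a$ for all $a\in A$. *)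

(* Defs.v *)
From HB Require Import structures.
From mathcomp Require Import all_boot all_order all_algebra.

Set Implicit Arguments.
Unset Strict Implicit.
Unset Printing Implicit Defensive.

Import GRing.Theory.
Local Open Scope ring_scope.

Definition bilinear_map (k : comPzRingType) (U V W : lmodType k)
  (f : U -> V -> W) : Prop :=
  (forall u, linear (f u)) /\ (forall v, linear (fun u => f u v)).

Definition dualmod (k : comPzRingType) (P : lmodType k) := {linear P -> k^o}.

(* (Q, b) is such that k, via b : P x Q -> k, is a tensor product P (x)_k Q,
   i.e. the linear map P (x) Q -> k induced by b is an isomorphism. *)
Definition is_tensor_to_k (k : comPzRingType) (P Q : lmodType k)
  (b : P -> Q -> k^o) : Prop :=
  bilinear_map b /\
  forall (M : lmodType k) (g : P -> Q -> M), bilinear_map g ->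
    exists h : {linear k^o -> M},
      (forall p q, g p q = h (b p q)) /\
      (forall h' : {linear k^o -> M}, (forall p q, g p q = h' (b p q)) -> h' =1 h).

Definition invertible_mod (k : comPzRingType) (P : lmodType k) : Prop :=
  exists (Q : lmodType k) (b : P -> Q -> k^o), is_tensor_to_k b.

Definition fg_projective (k : comPzRingType) (M : lmodType k) : Prop :=
  exists (n : nat) (s : {linear M -> 'rV[k]_n}) (r : {linear 'rV[k]_n -> M}),
    forall m, r (s m) = m.

(* A is P-Frobenius: A is f.g. projective over k and A_A ~= Hom_k(A,P)_A,
   where (psi a)(x) = psi (a x). *)
Definition P_Frobenius (k : comPzRingType) (P : lmodType k) (A : algType k) : Prop :=
  fg_projective A /\
  exists f : A -> {linear A -> P},
    [/\ (forall a b x, f (a + b) x = f a x + f b x),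
        (forall a b x, f (a * b) x = f a (b * x)) &
        bijective f].

Definition Frobenius_system (k : comPzRingType) (P : lmodType k) (A : algType k)
  (psi : {linear A -> P}) (n : nat) (x y : 'I_n -> A)
  (q : 'I_n -> dualmod P) : Prop :=
  [/\ (* a |-> psi a is an isomorphism A -> Hom_k(A,P) *)
      (forall a b, (forall z, psi (a * z) = psi (b * z)) -> a = b),
      (forall phi : {linear A -> P}, exists a, forall z, phi z = psi (a * z)),
      (forall a, \sum_(i < n) (q i (psi (y i * a)) : k) *: x i = a) &
      (forall a, \sum_(i < n) (q i (psi (a * x i)) : k) *: y i = a)].

(* Equality of two elements sum_j u_j (x) v_j and sum_j u'_j (x) v'_j of
   A (x)_k A, expressed through the universal property of the tensor product. *)
Definition tensor_eq (k : comPzRingType) (A : algType k)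
  (n : nat) (u v : 'I_n -> A) (n' : nat) (u' v' : 'I_n' -> A) : Prop :=
  forall (M : lmodType k) (f : A -> A -> M), bilinear_map f ->
    \sum_(j < n) f (u j) (v j) = \sum_(j < n') f (u' j) (v' j).

(* A is a separable k-algebra: it has a separability idempotent
   e = sum_j u_j (x) v_j in A (x)_k A^op with mu(e) = 1 and a e = e a. *)
Definition separable_alg (k : comPzRingType) (A : algType k) : Prop :=
  exists (n : nat) (u v : 'I_n -> A),
    \sum_(j < n) u j * v j = 1 /\
    forall a, tensor_eq (fun j => a * u j) v u (fun j => v j * a).

(* Main.v *)
Require Import Defs.
From HB Require Import structures.
From mathcomp Require Import all_boot all_order all_algebra.
From mathcomp Require Import generic_quotient ring_quotient.
From Stdlib Require Import ClassicalEpsilon.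
From mathcomp Require Import zify.
Set Implicit Arguments.
Unset Strict Implicit.
Import GRing.Theory.
Local Open Scope ring_scope.
Local Open Scope quotient_scope.

Section QMod.
Variables (k : comPzRingType) (S : k -> bool).
Hypothesis SH : [/\ S 0, (forall x y, S x -> S y -> S (x - y)) & (forall c x, S x -> S (c * x))].
Let S0 : S 0. Proof. by case: SH. Qed.
Let SB : forall x y, S x -> S y -> S (x - y). Proof. by case: SH. Qed.
Let SM : forall c x, S x -> S (c * x). Proof. by case: SH. Qed.

Definition Sp : {pred k} := fun x => S x.
Fact Sp_zmod : zmod_closed Sp.
Proof. split; [exact: S0| move=> x y; exact: SB]. Qed.
HB.instance Definition _ := GRing.isZmodClosed.Build k Sp Sp_zmod.

Definition QM := Quotient.quot (Sp : zmodClosed k).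
Definition qscale := locked (fun (c : k) (x : QM) => \pi_QM (c * repr x) : QM).

Lemma qscale_pi c y : qscale c (\pi_QM y) = \pi_QM (c * y).
Proof.
unlock qscale; apply/eqP; rewrite -Quotient.idealrBE.
rewrite -mulrBr; apply: SM.
have : (repr (\pi_QM y) == y %[mod QM]) by rewrite reprK.
by rewrite -Quotient.idealrBE.
Qed.

Lemma qscalerA a b v : qscale a (qscale b v) = qscale (a * b) v.
Proof. by elim/quotW: v => v; rewrite !qscale_pi mulrA. Qed.
Lemma qscale1r : left_id 1 qscale.
Proof. by elim/quotW=> v; rewrite !qscale_pi mul1r. Qed.
Lemma qscalerDr : right_distributive qscale +%R.
Proof. by move=> a; elim/quotW=> u; elim/quotW=> v; rewrite -raddfD !qscale_pi mulrDr raddfD. Qed.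
Lemma qscalerDl v : {morph qscale^~ v: a b / a + b}.
Proof. by elim/quotW: v => v a b; rewrite !qscale_pi mulrDl raddfD. Qed.

HB.instance Definition _ := GRing.Zmodule.on QM.
HB.instance Definition _ := GRing.Zmodule_isLmodule.Build k QM qscalerA qscale1r qscalerDr qscalerDl.

Lemma QM_pi_eq0 x : (\pi_QM x = 0 :> QM) -> S x.
Proof.
move=> h; have : (x - 0) \in Sp by rewrite Quotient.idealrBE; apply/eqP; rewrite h raddf0.
by rewrite subr0.
Qed.
Lemma QM_pi0 x : S x -> (\pi_QM x = 0 :> QM).
Proof. move=> h; have : (x - 0) \in Sp by rewrite subr0.
by rewrite Quotient.idealrBE => /eqP ->; rewrite raddf0. Qed.
Lemma QM_scale c (x : QM) : c *: x = qscale c x. Proof. by []. Qed.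
End QMod.

Section Lin.
Variables (k : comPzRingType) (U V : lmodType k) (f : U -> V) (hf : linear f).
Lemma linD x y : f (x + y) = f x + f y.
Proof. exact: (GRing.semilinear_linear hf).2. Qed.
Lemma linZ a x : f (a *: x) = a *: f x.
Proof. exact: (GRing.semilinear_linear hf).1. Qed.
Lemma lin0 : f 0 = 0.
Proof. by rewrite -(scale0r 0) linZ scale0r. Qed.
Lemma lin_sum (I : Type) (r : seq I) (F : I -> U) :
  f (\sum_(i <- r) F i) = \sum_(i <- r) f (F i).
Proof. exact: (big_morph f linD lin0). Qed.
End Lin.

Section ScaleV.
Variables (k : comPzRingType) (M : lmodType k) (v : M).
Definition scalev (c : k^o) : M := c *: v.
Fact scalev_lin : linear scalev.
Proof. by move=> a c d; rewrite /scalev scalerDl scalerA. Qed.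
HB.instance Definition _ := GRing.isLinear.Build k k^o M *:%R scalev scalev_lin.
End ScaleV.

Lemma hlin (k : comPzRingType) (M : lmodType k) (h : {linear k^o -> M}) (c : k) :
  h c = c *: h 1.
Proof. by rewrite -linearZ /= [c *: _]mulr1. Qed.

Lemma pig (R : comPzRingType) (s : R) (r : seq R) :
  (forall a, a \in r -> s * a ^+ 2 = 0) ->
  s * (\sum_(a <- r) a) ^+ (2 * size r + 1) = 0.
Proof.
elim: r => [|a r IH] H; first by rewrite big_nil expr1 mulr0.
have Ha : s * a ^+ 2 = 0 by apply: H; rewrite inE eqxx.
have {}IH := IH (fun b hb => H b (@mem_behead _ (a :: r) b hb)).
rewrite big_cons exprDn mulr_sumr big1 // => i _.
rewrite !mulrnAr; apply: (@eq_trans _ _ (0 *+ 'C(_, i))); last exact: mul0rn; congr (_ *+ _).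
set N := (2 * size (a :: r) + 1)%N.
have hi : (i <= N)%N by rewrite -ltnS.
case: (leqP 2 (N - i)) => h2.
  have E u : s * (a ^+ 2 * u) = 0 by rewrite mulrA Ha mul0r.
  by rewrite -(subnKC h2) exprD -mulrA E.
have hi2 : (2 * size r + 1 <= i)%N.
  by move: h2 hi; rewrite /N /=; lia.
have E u : s * ((\sum_(a <- r) a) ^+ (2 * size r + 1) * u) = 0 by rewrite mulrA IH mul0r.
by rewrite -(subnKC hi2) exprD mulrCA E.
Qed.

Section Tens.
Variables (k : comPzRingType) (P Q : lmodType k) (b : P -> Q -> k^o).
Hypothesis hb : is_tensor_to_k b.

Lemma bl1 u : linear (b u). Proof. exact: hb.1.1. Qed.
Lemma bl2 w : linear (fun u => b u w). Proof. exact: hb.1.2. Qed.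

Definition Iset (c : k) := exists s : seq (P * Q), c = \sum_(x <- s) b x.1 x.2.
Definition Sb (c : k) : bool := if excluded_middle_informative (Iset c) then true else false.
Lemma SbP c : Sb c <-> Iset c.
Proof. by rewrite /Sb; case: excluded_middle_informative. Qed.

Lemma sum1 : exists s : seq (P * Q), \sum_(x <- s) b x.1 x.2 = 1.
Proof.
have S0 : Sb 0 by apply/SbP; exists [::]; rewrite big_nil.
have SM : forall c x, Sb x -> Sb (c * x).
  move=> c x /SbP [s ->]; apply/SbP; exists [seq (c *: y.1, y.2) | y <- s].
  rewrite big_map mulr_sumr; apply: eq_bigr => y _ /=.
  by rewrite (linZ (bl2 _)).
have SB : forall x y, Sb x -> Sb y -> Sb (x - y).
  move=> x y /SbP [s ->] /SbP [s' ->]; apply/SbP.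
  exists (s ++ [seq (- z.1, z.2) | z <- s']).
  rewrite big_cat big_map /= -sumrN; congr (_ + _); apply: eq_bigr => z _.
  by rewrite -scaleN1r (linZ (bl2 _)) scaleN1r.
pose SH := And3 S0 SB SM.
pose M := QM SH.
pose v1 : QM SH := \pi_(QM SH) 1.
have bil0 : bilinear_map (fun (_ : P) (_ : Q) => (0 : M)).
  by split => ? ? ? ?; rewrite scaler0 addr0.
have [h [hg hu]] := hb.2 M _ bil0.
have e1 := hu (scalev v1).
have e0 := hu (scalev (0 : M)).
have c1 : forall p w, 0 = scalev v1 (b p w).
  move=> p w; change (0 = @qscale _ _ SH (b p w) v1); rewrite /v1 qscale_pi mulr1 QM_pi0 //.
  by apply/SbP; exists [:: (p, w)]; rewrite big_seq1.
have c0 : forall p w, 0 = scalev (0 : M) (b p w).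
  by move=> p w; rewrite /scalev scaler0.
have H1 : scalev v1 1 = scalev (0 : M) 1 by rewrite (e1 c1) (e0 c0).
have : Sb 1.
  apply: (@QM_pi_eq0 _ _ SH); move: H1; rewrite /scalev !scale1r => H1.
  exact: H1.
by move/SbP => [s ->]; exists s.
Qed.

Variable s0 : seq (P * Q).
Hypothesis hs0 : \sum_(x <- s0) b x.1 x.2 = 1.

Lemma factor (M : lmodType k) (g : P -> Q -> M) (hg : bilinear_map g) u w :
  g u w = b u w *: \sum_(x <- s0) g x.1 x.2.
Proof.
have [h [hgh _]] := hb.2 M g hg.
rewrite hgh hlin; congr (_ *: _).
under eq_bigr do rewrite hgh.
by rewrite -linear_sum /= hs0.
Qed.

Definition piP (z : P) : P := \sum_(x <- s0) b z x.2 *: x.1.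

Lemma piP_lin : linear piP.
Proof.
move=> a z z'; rewrite /piP scaler_sumr -big_split /=; apply: eq_bigr => x _.
by rewrite (linD (bl2 _)) (linZ (bl2 _)) scalerDl scalerA.
Qed.

Lemma lemA z w u : b z w *: u = b u w *: piP z.
Proof.
have hg : @bilinear_map k P Q P (fun u w => b z w *: u).
  split => [u' a w1 w2 | w' a u1 u2].
    by rewrite (linD (bl1 _)) (linZ (bl1 _)) scalerDl scalerA.
  by rewrite scalerDr !scalerA mulrC.
by rewrite (factor hg).
Qed.

Lemma pipi u : piP (piP u) = u.
Proof.
rewrite {2}/piP (lin_sum piP_lin).
under eq_bigr do rewrite (linZ piP_lin) -lemA.
by rewrite -scaler_suml hs0 scale1r.
Qed.

Definition tt0 := \sum_(x <- s0) b (piP x.1) x.2.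

Lemma b_pi z w : b (piP z) w = b z w * tt0.
Proof.
have hg : @bilinear_map k P Q k^o (fun u w => (b (piP u) w : k^o)).
  split => [u' | w']; first exact: bl1.
  by move=> a u1 u2 /=; rewrite piP_lin (linD (bl2 _)) (linZ (bl2 _)).
by rewrite (factor hg).
Qed.

Lemma nondeg v : (forall w, b v w = 0) -> v = 0.
Proof.
move=> H; rewrite -(pipi v).
have -> : piP v = 0 by rewrite /piP big1 // => x _; rewrite H scale0r.
exact: (lin0 piP_lin).
Qed.

Lemma pi_t z : piP z = tt0 *: z.
Proof.
apply/eqP; rewrite -subr_eq0; apply/eqP; apply: nondeg => w.
rewrite -scaleN1r (linD (bl2 _)) (linZ (bl2 _)) b_pi (linZ (bl2 _)).
by rewrite scaleN1r -[tt0 *: b z w]/(tt0 * b z w) mulrC subrr.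
Qed.

Lemma t1 : tt0 = 1.
Proof.
have H : forall a, a \in [seq b x.1 x.2 | x <- s0] -> (1 - tt0) * a ^+ 2 = 0.
  move=> a /mapP [x _ ->].
  have := lemA x.1 x.2 x.1; rewrite pi_t scalerA => /(congr1 (fun v => b v x.2)).
  rewrite !(linZ (bl2 _)); set a0 := b x.1 x.2 => E.
  have E' : a0 * a0 = a0 * tt0 * a0 := E.
  by rewrite expr2 mulrBl mul1r {1}E' -mulrA mulrCA subrr.
have := pig H; rewrite big_map hs0 expr1n mulr1 => /eqP; rewrite subr_eq0 => /eqP.
by move=> <-.
Qed.

Lemma swap z w u : b z w *: u = b u w *: z.
Proof. by rewrite lemA pi_t t1 scale1r. Qed.

Lemma rank1 (q q' : dualmod P) p p' : q p * q' p' = q p' * q' p.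
Proof.
pose F p p' := \sum_(x <- s0) q x.1 * q' (b p x.2 *: p').
have E : forall p p', q p * q' p' = F p p'.
  move=> p1 p2; rewrite -[p1 in q p1]scale1r -hs0 scaler_suml linear_sum mulr_suml.
  apply: eq_bigr => x _ /=; rewrite swap !linearZ /=.
  by change (b p1 x.2 * q x.1 * q' p2 = q x.1 * (b p1 x.2 * q' p2)); rewrite mulrCA mulrA.
rewrite !E /F; apply: eq_bigr => x _; by rewrite swap.
Qed.
End Tens.

Lemma rank1P (k : comPzRingType) (P : lmodType k) (hP : invertible_mod P)
  (q q' : dualmod P) p p' : q p * q' p' = q p' * q' p.
Proof.
have [Q [b hb]] := hP.
have [s0 hs0] := sum1 hb.
exact: (rank1 hb hs0).
Qed.

Lemma bil_left (k : comPzRingType) (A : algType k) (phi : A -> k) (hphi : linear (phi : A -> k^o)) (x : A) :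
  @bilinear_map k A A A (fun u v => x * (phi u *: v)).
Proof.
split => [u a v w | v a u w].
  by rewrite scalerDr mulrDr !scalerAr scalerA mulrC -scalerA.
by rewrite (linD hphi) (linZ hphi) scalerDl mulrDr -scalerA scalerAr.
Qed.

Theorem proposition6p1 (k : comPzRingType) (P : lmodType k) (A : algType k)
  (hP : invertible_mod P) (hA : P_Frobenius P A)
  (psi : {linear A -> P}) (n : nat) (x y : 'I_n -> A)
  (q : 'I_n -> dualmod P)
  (hsys : Frobenius_system psi x y q) :
  separable_alg A <->
  exists (m : nat) (p : 'I_m -> P) (a : 'I_m -> A),
    \sum_(i < n) \sum_(j < m) x i * ((q i (p j) : k) *: a j) * y i = 1.
Proof.
case: hsys => _ _ h3 h4.
have lin_qpsi : forall i, linear ((fun u => q i (psi u)) : A -> k^o).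
  by move=> i a u v; rewrite !linearP.
split.
  move=> [m [u [v [hsum hcent]]]].
  exists m, (fun j => psi (u j)), v.
  have E : forall i, \sum_(j < m) x i * ((q i (psi (u j)) : k) *: v j) * y i
      = \sum_(j < m) x i * ((q i (psi (y i * u j)) : k) *: v j).
    move=> i.
    have := hcent (y i) A _ (bil_left (lin_qpsi i) (x i)) => /= ->.
    by apply: eq_bigr => j _; rewrite -mulrA -scalerAl.
  under eq_bigr do rewrite E.
  rewrite exchange_big /= -hsum; apply: eq_bigr => j _.
  rewrite -{2}(h3 (u j)) mulr_suml; apply: eq_bigr => i _.
  by rewrite -scalerAr scalerAl.
move=> [m [p [a H]]].
exists n, (fun i => \sum_(j < m) x i * ((q i (p j) : k) *: a j)), y; split.
  by rewrite -H; apply: eq_bigr => i _; rewrite mulr_suml.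
move=> a0 M f [hf1 hf2].
set U := fun i => \sum_(j < m) x i * ((q i (p j) : k) *: a j).
have L : forall i, f (a0 * U i) (y i) = \sum_(j < m) \sum_(l < n)
    ((q l (psi (y l * (a0 * x i))) : k) * q i (p j)) *: f (x l * a j) (y i).
  move=> i; rewrite /U mulr_sumr (lin_sum (hf2 (y i))); apply: eq_bigr => j _.
  rewrite mulrA -{1}(h3 (a0 * x i)) mulr_suml (lin_sum (hf2 _)); apply: eq_bigr => l _.
  by rewrite -scalerAl -scalerAr scalerA (linZ (hf2 _)).
have R : forall i, f (U i) (y i * a0) = \sum_(j < m) \sum_(l < n)
    ((q i (p j) : k) * q l (psi (y i * a0 * x l))) *: f (x i * a j) (y l).
  move=> i; rewrite /U (lin_sum (hf2 _)); apply: eq_bigr => j _.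
  rewrite -scalerAr (linZ (hf2 _)) -{1}(h4 (y i * a0)) (lin_sum (hf1 _)) scaler_sumr.
  by apply: eq_bigr => l _; rewrite (linZ (hf1 _)) scalerA.
rewrite /=; under eq_bigr do rewrite L.
under [RHS]eq_bigr do rewrite R.
rewrite [RHS]exchange_big /=.
under [RHS]eq_bigr do rewrite exchange_big /=.
rewrite [RHS]exchange_big /=.
apply: eq_bigr => i _; apply: eq_bigr => j _; apply: eq_bigr => l _.
by rewrite [y l * (a0 * x i)]mulrA (rank1P hP (q l) (q i)).
Qed.
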